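(* Let $\mathcal M=\mathcal M_4$ and $n\ge1$. Then $m_{\mathrm{opt}}(n)<4b(n)\le 4\log_2(n+1)$.
   Context: Let $\mathbf X=\{X_1,\dots,X_n\}$ with the uniform measure. For $1\le m\le n$ let $\mathcal X_m$ be the set of finite sequences $\chi=(\chi_1,\dots,\chi_\ell)$ in $\mathbf X$ with exactly $m$ distinct entries and with $\chi_\ell$ different from all earlier entries; $\ell(\chi)$ is the length, $\chi$ has weight $n^{-\ell(\chi)}$, and $E_m[f]=\sum_{\chi\in\mathcal X_m}f(\chi)n^{-\ell(\chi)}$. Let $t_j(\chi)$ be the least $t\ge 0$ with $|\{\chi_1,\dots,\chi_t\}|=j$ ($0\le j\le m$) and $\tau_j(\chi)=t_{j+1}(\chi)-t_j(\chi)-1$ for $1\le j\le m-1$. Let $b(j)=(1+\frac1j)\log_2(j+1)-1$. In model $\mathcal M_4$ (complete memory, numbered shelves) the average total cost is $F(m)=2m\,b(n)\,E_m[1/\ell]+\sum_{j=1}^{m-1}E_m[\tau_j/\ell]\,\frac{j+1}{2}$, and $m_{\mathrm{opt}}(n)$ is the smallest $m\in\{1,\dots,n\}$ minimizing $F(m)$. *)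

(* Defs.v *)
From Stdlib Require Import Reals Lra Lia List Arith ClassicalEpsilon.
Import ListNotations.
Open Scope R_scope.

(* The ground set X = {X_1,...,X_n} is represented by {0,...,n-1}. *)

Fixpoint all_seqs (n l : nat) : list (list nat) :=
  match l with
  | O => [ [] ]
  | S l' => flat_map (fun s => map (fun x => s ++ [x]) (seq 0 n)) (all_seqs n l')
  end.

Definition ndist (s : list nat) : nat := length (nodup Nat.eq_dec s).

(* chi in X_m : exactly m distinct entries and the last entry differs from
   all earlier ones (in particular chi is nonempty). *)
Definition inXm (m : nat) (s : list nat) : bool :=
  Nat.eqb (ndist s) m &&
  match rev s with
  | [] => false
  | x :: r => negb (existsb (Nat.eqb x) r)
  end.

Definition series_val (u : nat -> R) : R :=
  epsilon (inhabits 0) (fun L => infinite_sum u L).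

Definition finsum (l : list R) : R := fold_right Rplus 0 l.

(* E_m[f] = sum_{chi in X_m} f(chi) n^{-l(chi)}, grouped by length l. *)
Definition Em (n m : nat) (f : list nat -> R) : R :=
  series_val (fun l =>
    finsum (map (fun s => if inXm m s then f s / (INR n ^ l) else 0)
                (all_seqs n l))).

Definition tj (s : list nat) (j : nat) : nat :=
  match find (fun t => Nat.eqb (ndist (firstn t s)) j) (seq 0 (S (length s))) with
  | Some t => t
  | None => O
  end.

Definition tauj (s : list nat) (j : nat) : nat := (tj s (S j) - tj s j - 1)%nat.

Definition log2 (x : R) : R := ln x / ln 2.

Definition b (x : R) : R := (1 + 1 / x) * log2 (x + 1) - 1.

(* Average total cost in model M_4 *)
Definition F4 (n m : nat) : R :=
  2 * INR m * b (INR n) * Em n m (fun s => / INR (length s))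
  + finsum (map (fun j => Em n m (fun s => INR (tauj s j) / INR (length s))
                          * ((INR j + 1) / 2))
                (seq 1 (m - 1))).

(* smallest m in {1,...,n} minimizing F4 n m *)
Definition mopt (n : nat) : nat :=
  fold_left (fun best k => if Rlt_dec (F4 n k) (F4 n best) then k else best)
            (seq 2 (n - 1)) 1%nat.

(* Main.v *)
Require Import Defs.
From Stdlib Require Import Reals Lra Lia List Arith ZArith Classical ClassicalEpsilon.
Import ListNotations.
Open Scope R_scope.


Lemma finsum_app l1 l2 : finsum (l1 ++ l2) = finsum l1 + finsum l2.
Proof. induction l1; simpl; [lra|rewrite IHl1; lra]. Qed.

Lemma finsum_plus {A} (f g : A -> R) l :
  finsum (map (fun x => f x + g x) l) = finsum (map f l) + finsum (map g l).
Proof. induction l; simpl; [lra|rewrite IHl; lra]. Qed.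

Lemma finsum_scal {A} (c : R) (f : A -> R) l :
  finsum (map (fun x => c * f x) l) = c * finsum (map f l).
Proof. induction l; simpl; [lra|rewrite IHl; lra]. Qed.

Lemma finsum_div {A} (c : R) (f : A -> R) l :
  finsum (map (fun x => f x / c) l) = finsum (map f l) / c.
Proof. induction l; simpl; unfold Rdiv in *; [lra|rewrite IHl; lra]. Qed.

Lemma finsum_le {A} (f g : A -> R) l :
  (forall x, In x l -> f x <= g x) -> finsum (map f l) <= finsum (map g l).
Proof.
  induction l; simpl; intros H; [lra|].
  assert (f a <= g a) by auto. assert (finsum (map f l) <= finsum (map g l)) by auto. lra.
Qed.

Lemma finsum_ext {A} (f g : A -> R) l :
  (forall x, In x l -> f x = g x) -> finsum (map f l) = finsum (map g l).
Proof.
  induction l; simpl; intros H; [lra|]. rewrite H by auto. rewrite IHl by auto. lra.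
Qed.

Lemma finsum_nonneg {A} (f : A -> R) l :
  (forall x, In x l -> 0 <= f x) -> 0 <= finsum (map f l).
Proof.
  intros H. replace 0 with (finsum (map (fun _ : A => 0) l)).
  apply finsum_le; auto. clear H; induction l; simpl; lra.
Qed.

Lemma finsum_const {A} (c : R) (l : list A) :
  finsum (map (fun _ => c) l) = c * INR (length l).
Proof. induction l; simpl length; rewrite ?S_INR; simpl; [lra|rewrite IHl; lra]. Qed.

Lemma finsum_flat_map {A B} (f : B -> R) (g : A -> list B) l :
  finsum (map f (flat_map g l)) = finsum (map (fun x => finsum (map f (g x))) l).
Proof. induction l; simpl; [lra|]. rewrite map_app, finsum_app, IHl; lra. Qed.

Lemma finsum_map_map {A B} (f : B -> R) (g : A -> B) l :
  finsum (map f (map g l)) = finsum (map (fun x => f (g x)) l).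
Proof. rewrite map_map; reflexivity. Qed.

Lemma finsum_swap {A B} (h : A -> B -> R) l1 l2 :
  finsum (map (fun x => finsum (map (fun y => h x y) l2)) l1)
  = finsum (map (fun y => finsum (map (fun x => h x y) l1)) l2).
Proof.
  induction l1; simpl.
  - rewrite finsum_const; lra.
  - rewrite IHl1. rewrite <- finsum_plus. reflexivity.
Qed.

Lemma all_seqs_S n l :
  all_seqs n (S l) = flat_map (fun s => map (fun x => s ++ [x]) (seq 0 n)) (all_seqs n l).
Proof. reflexivity. Qed.

Lemma all_seqs_length n l : length (all_seqs n l) = (n ^ l)%nat.
Proof.
  induction l; simpl; auto.
  rewrite flat_map_concat_map, length_concat, map_map.
  erewrite map_ext. 2:{ intros; rewrite length_map, length_seq; reflexivity. }
  revert IHl. generalize (all_seqs n l). intros L HL. rewrite <- HL.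
  clear. induction L; simpl; auto. rewrite IHL. lia.
Qed.

Lemma all_seqs_bound n l u : In u (all_seqs n l) -> (forall y, In y u -> (y < n)%nat) /\ length u = l.
Proof.
  revert u; induction l; simpl; intros u Hu.
  - destruct Hu as [<-|[]]; simpl; split; auto; intros _ [].
  - apply in_flat_map in Hu. destruct Hu as [s [Hs Hx]].
    apply in_map_iff in Hx. destruct Hx as [x [<- Hx]]. apply in_seq in Hx.
    destruct (IHl s Hs) as [H1 H2]. split.
    + intros y Hy. apply in_app_or in Hy. destruct Hy as [Hy|[<-|[]]]; auto; lia.
    + rewrite length_app; simpl; lia.
Qed.

Lemma sum_all_S n l (f : list nat -> R) :
  finsum (map f (all_seqs n (S l))) =
  finsum (map (fun u => finsum (map (fun x => f (u ++ [x])) (seq 0 n))) (all_seqs n l)).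
Proof. rewrite all_seqs_S, finsum_flat_map. apply finsum_ext; intros; apply finsum_map_map. Qed.

Close Scope R_scope.

Lemma nodup_len_eq (a b : list nat) : NoDup a -> NoDup b -> (forall y, In y a <-> In y b) -> length a = length b.
Proof.
  intros Ha Hb H. apply Nat.le_antisymm; apply NoDup_incl_length; auto; intros y Hy; apply H; auto.
Qed.

Lemma ndist_incl (a b : list nat) : incl a b -> (ndist a <= ndist b)%nat.
Proof.
  intros H. unfold ndist. apply NoDup_incl_length. apply NoDup_nodup.
  intros y Hy. apply nodup_In. apply nodup_In in Hy. auto.
Qed.

Lemma ndist_snoc u x : ndist (u ++ [x]) = if in_dec Nat.eq_dec x u then ndist u else S (ndist u).
Proof.
  unfold ndist. destruct (in_dec Nat.eq_dec x u) as [Hi|Hn].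
  - apply nodup_len_eq; try apply NoDup_nodup. intros y. rewrite !nodup_In.
    split; intros Hy; [apply in_app_or in Hy; destruct Hy as [|[<-|[]]]; auto|apply in_or_app; auto].
  - change (S (length (nodup Nat.eq_dec u))) with (length (x :: nodup Nat.eq_dec u)).
    apply nodup_len_eq; try apply NoDup_nodup.
    + constructor; [rewrite nodup_In; auto| apply NoDup_nodup].
    + intros y. rewrite nodup_In. simpl. rewrite nodup_In.
      split; intros Hy; [apply in_app_or in Hy; destruct Hy as [|[<-|[]]]; auto|].
      apply in_or_app. destruct Hy as [<-|]; simpl; auto.
Qed.

Lemma ndist_nil : ndist [] = 0%nat.
Proof. reflexivity. Qed.

Lemma ndist_le_length u : (ndist u <= length u)%nat.
Proof. unfold ndist. apply NoDup_incl_length. apply NoDup_nodup. intros y; rewrite nodup_In; auto. Abort.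

Definition dd (s : list nat) (t : nat) : nat := ndist (firstn t s).

Lemma dd_0 s : dd s 0 = 0%nat.
Proof. reflexivity. Qed.

Lemma dd_S s t : (dd s (S t) <= S (dd s t))%nat /\ (dd s t <= dd s (S t))%nat.
Proof.
  unfold dd. destruct (Nat.lt_ge_cases t (length s)) as [Hl|Hl].
  - destruct (nth_error s t) eqn:E.
    2:{ apply nth_error_None in E; lia. }
    pose proof (firstn_skipn_middle t s E) as Hs.
    assert (firstn (S t) s = firstn t s ++ [n]) as ->.
    { rewrite <- Hs at 1. rewrite firstn_app. rewrite firstn_length_le by lia.
      replace (S t - t)%nat with 1%nat by lia.
      rewrite firstn_all2 by (rewrite firstn_length_le; lia). reflexivity. }
    rewrite ndist_snoc. destruct in_dec; lia.
  - rewrite !firstn_all2 by lia. lia.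
Qed.

Lemma dd_mono s t1 t2 : (t1 <= t2)%nat -> (dd s t1 <= dd s t2)%nat.
Proof. induction 1; auto. pose proof (dd_S s m). lia. Qed.

Lemma dd_len s : dd s (length s) = ndist s.
Proof. unfold dd. rewrite firstn_all. reflexivity. Qed.

Lemma dd_le s t : (dd s t <= ndist s)%nat.
Proof. unfold dd. apply ndist_incl. intros y Hy. rewrite <- (firstn_skipn t s). apply in_or_app; auto. Qed.

Lemma dd_ivt s t j : (j <= dd s t)%nat -> exists t', (t' <= t)%nat /\ dd s t' = j.
Proof.
  induction t; intros H.
  - exists 0%nat. rewrite dd_0 in H. split; [lia|]. rewrite dd_0. lia.
  - pose proof (dd_S s t) as [H1 H2].
    destruct (Nat.eq_dec j (dd s (S t))) as [E|E].
    + exists (S t); auto.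
    + destruct IHt as [t' [? ?]]; [lia|]. exists t'; split; auto.
Qed.

Lemma find_seq_min (p : nat -> bool) a c x :
  find p (seq a c) = Some x -> p x = true /\ (a <= x < a + c)%nat /\ forall y, (a <= y < x)%nat -> p y = false.
Proof.
  revert a; induction c; simpl; intros a H; [discriminate|].
  destruct (p a) eqn:Pa.
  - inversion H; subst. split; auto. split; [lia|]. intros; lia.
  - destruct (IHc (S a) H) as [H1 [H2 H3]]. split; auto. split; [lia|].
    intros y Hy. destruct (Nat.eq_dec y a); [subst; auto|]. apply H3; lia.
Qed.

Definition Pt (s : list nat) (j t : nat) : Prop :=
  (t <= length s)%nat /\ dd s t = j /\ forall y, (y < t)%nat -> dd s y <> j.

Lemma tj_spec s j : (j <= ndist s)%nat -> Pt s j (tj s j).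
Proof.
  intros Hj. unfold tj.
  destruct (find (fun t => Nat.eqb (ndist (firstn t s)) j) (seq 0 (S (length s)))) eqn:E.
  - apply find_seq_min in E. destruct E as [H1 [H2 H3]].
    apply Nat.eqb_eq in H1. split; [lia|]. split; auto.
    intros y Hy. specialize (H3 y ltac:(lia)). apply Nat.eqb_neq in H3. auto.
  - exfalso. rewrite <- dd_len in Hj. destruct (dd_ivt s _ _ Hj) as [t' [? ?]].
    pose proof (find_none _ _ E t') as F. rewrite in_seq in F.
    specialize (F ltac:(lia)). apply Nat.eqb_neq in F. auto.
Qed.

Lemma tj_le_length s j : (tj s j <= length s)%nat.
Proof.
  unfold tj. destruct find eqn:E; [|lia].
  apply find_seq_min in E. lia.
Qed.

Lemma Pt_min s j t t' : Pt s j t -> dd s t' = j -> (t <= t')%nat.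
Proof. intros [_ [_ H]] H'. destruct (Nat.lt_ge_cases t' t); auto. exfalso; eapply H; eauto. Qed.

Lemma Pt_unique s j t1 t2 : Pt s j t1 -> Pt s j t2 -> t1 = t2.
Proof.
  intros H1 H2. apply Nat.le_antisymm; [eapply Pt_min; eauto; apply H2|eapply Pt_min; eauto; apply H1].
Qed.

Lemma tj_eq s j t : Pt s j t -> tj s j = t.
Proof.
  intros H. apply Pt_unique with s j; auto. apply tj_spec.
  destruct H as [H1 [H2 _]]. rewrite <- H2. apply dd_le.
Qed.

Lemma tj_lt s j : (S j <= ndist s)%nat -> (tj s j < tj s (S j))%nat.
Proof.
  intros H. pose proof (tj_spec s (S j) H) as [A [B C]].
  destruct (dd_ivt s (tj s (S j)) j ltac:(lia)) as [t' [Ht' Dt']].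
  assert (t' <> tj s (S j)) by (intro E; rewrite E in Dt'; rewrite Dt' in B; lia).
  pose proof (Pt_min s j (tj s j) t' (tj_spec s j ltac:(lia)) Dt'). lia.
Qed.

Lemma tj_1 s : (1 <= ndist s)%nat -> tj s 1 = 1%nat.
Proof.
  intros H. apply tj_eq. destruct s as [|a s]; [rewrite ndist_nil in H; lia|].
  split; [simpl length; lia|]. split; [reflexivity|].
  intros y Hy. replace y with 0%nat by lia. rewrite dd_0. lia.
Qed.

Lemma dd_firstn s T t : (t <= T)%nat -> dd (firstn T s) t = dd s t.
Proof. intros H. unfold dd. rewrite firstn_firstn. f_equal. f_equal. lia. Qed.

Lemma tj_firstn s T j : (j <= ndist s)%nat -> (tj s j <= T)%nat -> (T <= length s)%nat ->
  tj (firstn T s) j = tj s j.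
Proof.
  intros Hj HT Hl. pose proof (tj_spec s j Hj) as [A [B C]].
  apply tj_eq. split; [rewrite firstn_length_le; lia|].
  split; [rewrite dd_firstn; auto|].
  intros y Hy. rewrite dd_firstn by lia. auto.
Qed.

Lemma dd_snoc s x t : (t <= length s)%nat -> dd (s ++ [x]) t = dd s t.
Proof. intros H. unfold dd. rewrite firstn_app. replace (t - length s)%nat with 0%nat by lia.
  simpl. rewrite app_nil_r. reflexivity. Qed.

Lemma tj_snoc s x j : (j <= ndist s)%nat -> tj (s ++ [x]) j = tj s j.
Proof.
  intros Hj. pose proof (tj_spec s j Hj) as [A [B C]].
  apply tj_eq. split; [rewrite length_app; lia|].
  split; [rewrite dd_snoc; auto|].
  intros y Hy. rewrite dd_snoc by lia. auto.
Qed.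

Lemma tj_snoc_new s x : ~ In x s -> tj (s ++ [x]) (S (ndist s)) = S (length s).
Proof.
  intros Hx. apply tj_eq. split; [rewrite length_app; simpl; lia|]. split.
  - replace (S (length s)) with (length (s ++ [x])) by (rewrite length_app; simpl; lia).
    rewrite dd_len, ndist_snoc. destruct in_dec; [contradiction|auto].
  - intros y Hy. rewrite dd_snoc by lia. pose proof (dd_le s y). lia.
Qed.

Open Scope R_scope.


Definition stop (m : nat) (u : list nat) := firstn (tj u m) u.

Definition Sl n m (f : list nat -> R) l :=
  finsum (map (fun s => if inXm m s then f s / (INR n ^ l) else 0) (all_seqs n l)).

Definition U n m (f : list nat -> R) L :=
  finsum (map (fun u => if Nat.leb m (ndist u) then f (stop m u) else 0) (all_seqs n L)) / INR n ^ L.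

Lemma inXm_snoc m u x : inXm m (u ++ [x]) = true <-> ndist (u ++ [x]) = m /\ ~ In x u.
Proof.
  unfold inXm. rewrite rev_unit. rewrite Bool.andb_true_iff, Nat.eqb_eq, Bool.negb_true_iff.
  split; intros [H1 H2]; split; auto.
  - intro Hi. assert (existsb (Nat.eqb x) (rev u) = true) by
      (apply existsb_exists; exists x; split; [apply in_rev in Hi; auto|apply Nat.eqb_refl]). congruence.
  - destruct (existsb (Nat.eqb x) (rev u)) eqn:E; auto. apply existsb_exists in E.
    destruct E as [y [Hy Ey]]. apply Nat.eqb_eq in Ey; subst. apply in_rev in Hy. contradiction.
Qed.

Lemma inXm_nil m : inXm m [] = false.
Proof. unfold inXm. simpl. apply Bool.andb_false_r. Qed.

Lemma stop_snoc_old m u x : (m <= ndist u)%nat -> stop m (u ++ [x]) = stop m u.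
Proof.
  intros H. unfold stop. rewrite tj_snoc by auto. rewrite firstn_app.
  pose proof (tj_le_length u m). replace (tj u m - length u)%nat with 0%nat by lia.
  simpl. apply app_nil_r.
Qed.

Lemma per_u n m f u :
  finsum (map (fun x => if Nat.leb m (ndist (u ++ [x])) then f (stop m (u ++ [x])) else 0) (seq 0 n))
  = (if Nat.leb m (ndist u) then INR n * f (stop m u) else 0)
    + finsum (map (fun x => if inXm m (u ++ [x]) then f (u ++ [x]) else 0) (seq 0 n)).
Proof.
  destruct (Nat.leb m (ndist u)) eqn:E.
  - apply Nat.leb_le in E.
    rewrite (finsum_ext _ (fun _ => f (stop m u))).
    2:{ intros x _. rewrite stop_snoc_old by auto.
        assert (Nat.leb m (ndist (u ++ [x])) = true) as ->; auto.
        apply Nat.leb_le. rewrite ndist_snoc. destruct in_dec; lia. }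
    rewrite (finsum_ext (fun x => if inXm m (u ++ [x]) then f (u ++ [x]) else 0) (fun _ => 0)).
    2:{ intros x _. destruct (inXm m (u ++ [x])) eqn:I; auto.
        apply inXm_snoc in I. destruct I as [I1 I2]. rewrite ndist_snoc in I1.
        destruct in_dec; [contradiction|lia]. }
    rewrite !finsum_const, length_seq. lra.
  - apply Nat.leb_gt in E. rewrite Rplus_0_l. apply finsum_ext. intros x _.
    destruct (inXm m (u ++ [x])) eqn:I.
    + apply inXm_snoc in I. destruct I as [I1 I2].
      assert (Nat.leb m (ndist (u ++ [x])) = true) as -> by (apply Nat.leb_le; lia).
      f_equal. unfold stop. rewrite <- I1. rewrite ndist_snoc. destruct in_dec; [contradiction|].
      rewrite tj_snoc_new by auto. apply firstn_all2. rewrite length_app; simpl; lia.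
    + destruct (Nat.leb m (ndist (u ++ [x]))) eqn:L; auto. exfalso.
      apply Nat.leb_le in L. rewrite ndist_snoc in L. destruct in_dec as [|Hn]; [lia|].
      assert (inXm m (u ++ [x]) = true); [|congruence].
      apply inXm_snoc. rewrite ndist_snoc. destruct in_dec; [contradiction|]. split; auto; lia.
Qed.

Lemma partial_eq n m f L : (1 <= n)%nat -> (1 <= m)%nat -> sum_f_R0 (Sl n m f) L = U n m f L.
Proof.
  intros Hn Hm. assert (Hn0 : INR n <> 0) by (apply not_0_INR; lia).
  induction L.
  - simpl. unfold Sl, U. simpl. rewrite inXm_nil.
    destruct (Nat.leb m (ndist [])) eqn:E; [apply Nat.leb_le in E; rewrite ndist_nil in E; lia|].
    field.
  - simpl sum_f_R0. rewrite IHL. unfold U, Sl. rewrite !sum_all_S.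
    set (A := all_seqs n L).
    set (g := fun u => finsum (map (fun x => if inXm m (u ++ [x]) then f (u ++ [x]) else 0) (seq 0 n))).
    assert (E1 : finsum (map (fun u => finsum (map (fun x => if inXm m (u ++ [x]) then f (u ++ [x]) / INR n ^ S L else 0) (seq 0 n))) A)
       = finsum (map g A) / INR n ^ S L).
    { rewrite <- finsum_div. apply finsum_ext. intros u _. unfold g. rewrite <- finsum_div.
      apply finsum_ext. intros x _. destruct inXm; lra. }
    assert (E2 : finsum (map (fun u => finsum (map (fun x => if Nat.leb m (ndist (u ++ [x])) then f (stop m (u ++ [x])) else 0) (seq 0 n))) A)
      = INR n * finsum (map (fun u => if Nat.leb m (ndist u) then f (stop m u) else 0) A) + finsum (map g A)).
    { rewrite <- finsum_scal, <- finsum_plus. apply finsum_ext. intros u _. rewrite per_u.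
      unfold g. destruct Nat.leb; lra. }
    rewrite E1, E2. simpl pow. field. split; auto. apply pow_nonzero; auto.
Qed.


Lemma Rdiv_le_0_compat a b : 0 <= a -> 0 < b -> 0 <= a / b.
Proof. intros. unfold Rdiv. apply Rmult_le_pos; auto. left; apply Rinv_0_lt_compat; auto. Qed.

Lemma cv_const c : Un_cv (fun _ => c) c.
Proof. intros e He. exists 0%nat. intros. unfold R_dist. rewrite Rminus_diag, Rabs_R0. auto. Qed.

Lemma cv_scal u l c : Un_cv u l -> Un_cv (fun L => c * u L) (c * l).
Proof. intros H. apply CV_mult; auto. apply cv_const. Qed.

Lemma cv_ext u v l : (forall L, u L = v L) -> Un_cv u l -> Un_cv v l.
Proof. intros E H e He. destruct (H e He) as [N HN]. exists N. intros. rewrite <- E. auto. Qed.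

Lemma U_bound n m f L : (1 <= n)%nat -> (forall s, 0 <= f s <= 1) -> 0 <= U n m f L <= 1.
Proof.
  intros Hn Hf. unfold U. assert (0 < INR n ^ L) by (apply pow_lt; apply lt_0_INR; lia).
  split.
  - apply Rdiv_le_0_compat; auto. apply finsum_nonneg. intros; destruct Nat.leb; [apply Hf|lra].
  - apply Rmult_le_reg_r with (INR n ^ L); auto. unfold Rdiv. rewrite Rmult_assoc, Rinv_l by lra.
    rewrite Rmult_1_r, Rmult_1_l.
    apply Rle_trans with (finsum (map (fun _ => 1) (all_seqs n L))).
    + apply finsum_le. intros; destruct Nat.leb; [apply Hf|lra].
    + rewrite finsum_const, all_seqs_length, pow_INR. lra.
Qed.

Lemma Em_cv n m f : (1 <= n)%nat -> (1 <= m)%nat -> (forall s, 0 <= f s <= 1) ->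
  Un_cv (U n m f) (Em n m f).
Proof.
  intros Hn Hm Hf.
  assert (Hnn : 0 < INR n) by (apply lt_0_INR; lia).
  assert (Hg : Un_growing (sum_f_R0 (Sl n m f))).
  { intros L. simpl. assert (0 <= Sl n m f (S L)); [|lra].
    unfold Sl. apply finsum_nonneg. intros s _. destruct inXm; [|lra].
    apply Rdiv_le_0_compat; [apply Hf|apply pow_lt; auto]. }
  assert (Hb : has_ub (sum_f_R0 (Sl n m f))).
  { exists 1. intros x [i ->]. rewrite partial_eq by auto. apply U_bound; auto. }
  destruct (growing_cv _ Hg Hb) as [l Hl].
  assert (Hs : infinite_sum (Sl n m f) l) by exact Hl.
  assert (He : infinite_sum (Sl n m f) (Em n m f)).
  { unfold Em, series_val. apply epsilon_spec. exists l. exact Hs. }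
  rewrite <- (uniqueness_sum _ _ _ Hs He).
  apply cv_ext with (sum_f_R0 (Sl n m f)); auto. intros; apply partial_eq; auto.
Qed.

Lemma U_ext n m f g L : (forall s, f s = g s) -> U n m f L = U n m g L.
Proof. intros H. unfold U. f_equal. apply finsum_ext. intros; destruct Nat.leb; auto. Qed.

Lemma U_plus n m f g L : U n m (fun s => f s + g s) L = U n m f L + U n m g L.
Proof. unfold U. unfold Rdiv. rewrite <- Rmult_plus_distr_r. f_equal.
  rewrite <- finsum_plus. apply finsum_ext. intros; destruct Nat.leb; lra. Qed.

Lemma U_scal n m c f L : U n m (fun s => c * f s) L = c * U n m f L.
Proof. unfold U. unfold Rdiv. rewrite <- Rmult_assoc, <- finsum_scal. f_equal.
  apply finsum_ext. intros; destruct Nat.leb; lra. Qed.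

Lemma U_sum n m (h : nat -> list nat -> R) J L :
  U n m (fun s => finsum (map (fun j => h j s) J)) L = finsum (map (fun j => U n m (h j) L) J).
Proof.
  induction J; simpl.
  - unfold U. rewrite (finsum_ext _ (fun _ => 0)) by (intros; destruct Nat.leb; auto).
    rewrite finsum_const. unfold Rdiv. lra.
  - rewrite U_plus, IHJ. reflexivity.
Qed.

Definition Gm (n m : nat) (s : list nat) : R :=
  2 * INR m * b (INR n) * / INR (length s)
  + finsum (map (fun j => INR (tauj s j) / INR (length s) * ((INR j + 1) / 2)) (seq 1 (m - 1))).

Lemma f1_bound (s : list nat) : 0 <= / INR (length s) <= 1.
Proof.
  destruct (length s) eqn:E. simpl. rewrite Rinv_0. lra.
  rewrite S_INR. pose proof (pos_INR n). split.
  left; apply Rinv_0_lt_compat; lra.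
  rewrite <- Rinv_1. apply Rinv_le_contravar; lra.
Qed.

Lemma ftau_bound (s : list nat) j : 0 <= INR (tauj s j) / INR (length s) <= 1.
Proof.
  assert (H : (tauj s j <= length s)%nat).
  { unfold tauj. pose proof (tj_le_length s (S j)). lia. }
  destruct (length s) eqn:E.
  - replace (tauj s j) with 0%nat by lia. simpl. unfold Rdiv. lra.
  - apply le_INR in H. pose proof (pos_INR (tauj s j)). rewrite S_INR in *. pose proof (pos_INR n).
    split. apply Rdiv_le_0_compat; lra.
    apply Rmult_le_reg_r with (INR n + 1); [lra|]. unfold Rdiv. rewrite Rmult_assoc, Rinv_l by lra. lra.
Qed.

Lemma F4_cv n m : (1 <= n)%nat -> (1 <= m)%nat -> Un_cv (U n m (Gm n m)) (F4 n m).
Proof.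
  intros Hn Hm. unfold F4.
  apply cv_ext with (fun L => 2 * INR m * b (INR n) * U n m (fun s => / INR (length s)) L
     + finsum (map (fun j => U n m (fun s => INR (tauj s j) / INR (length s)) L * ((INR j + 1) / 2)) (seq 1 (m - 1)))).
  { intros L. unfold Gm. rewrite U_plus, (U_scal n m (2 * INR m * b (INR n)) (fun s => / INR (length s))). f_equal.
    rewrite U_sum. apply finsum_ext. intros j _.
    rewrite Rmult_comm, <- U_scal. apply U_ext. intros; lra. }
  apply CV_plus.
  - apply cv_scal. apply Em_cv; auto. intros; apply f1_bound.
  - generalize (seq 1 (m - 1)). intros J. induction J; simpl.
    + apply cv_const.
    + apply CV_plus; auto. apply CV_mult; [|apply cv_const]. apply Em_cv; auto. intros; apply ftau_bound.
Qed.


Lemma tj_mono u j j' : (j <= j')%nat -> (j' <= ndist u)%nat -> (tj u j <= tj u j')%nat.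
Proof.
  intros Hle Hn. induction Hle as [|j'' Hle IH]; auto. pose proof (tj_lt u j'' Hn). specialize (IH ltac:(lia)). lia.
Qed.

Lemma stop_len m u : (m <= ndist u)%nat -> length (stop m u) = tj u m.
Proof. intros. unfold stop. apply firstn_length_le, tj_le_length. Qed.

Lemma stop_tau m u j : (m <= ndist u)%nat -> (S j <= m)%nat -> tauj (stop m u) j = tauj u j.
Proof.
  intros H1 H2. unfold tauj, stop.
  rewrite !tj_firstn; auto; try apply tj_le_length; try lia; apply tj_mono; lia.
Qed.

Lemma tj_sum u m : (1 <= m)%nat -> (m <= ndist u)%nat ->
  INR (tj u m) = INR m + finsum (map (fun j => INR (tauj u j)) (seq 1 (m - 1))).
Proof.
  intros H1. induction m as [|m IH]; [lia|]. intros H2.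
  destruct (Nat.eq_dec m 0) as [->|Hm].
  - simpl. rewrite tj_1 by lia. simpl. lra.
  - replace (S m - 1)%nat with (S (m - 1)) by lia. rewrite seq_S, map_app, finsum_app.
    replace (1 + (m - 1))%nat with m by lia. simpl finsum.
    pose proof (IH ltac:(lia) ltac:(lia)) as IH'. pose proof (tj_lt u m H2).
    assert (E : tj u (S m) = (tj u m + tauj u m + 1)%nat) by (unfold tauj; lia).
    rewrite E, !plus_INR, (S_INR m). simpl (INR 1). lra.
Qed.

Lemma frac_le x y z w : 0 < y -> 0 < w -> x * w <= z * y -> x / y <= z / w.
Proof.
  intros Hy Hw H. apply Rmult_le_reg_r with (y * w). nra.
  replace (x / y * (y * w)) with (x * w) by (field; lra).
  replace (z / w * (y * w)) with (z * y) by (field; lra). auto.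
Qed.

Lemma key_ineq K M bb a c al g : 0 < K -> K <= M -> 0 <= a -> 0 <= al -> c <= 2*bb*a -> 2*bb*al <= g ->
  (2*K*bb + c)/(K+a) <= (2*M*bb + (c+g))/(M+a+al).
Proof.
  intros. apply frac_le; try lra.
  assert (0 <= (M - K) * (2*bb*a - c)) by (apply Rmult_le_pos; lra).
  assert (0 <= (K + a) * (g - 2*bb*al)) by (apply Rmult_le_pos; lra).
  nra.
Qed.

Lemma Gm_stop n m u : (1 <= m)%nat -> (m <= ndist u)%nat ->
  Gm n m (stop m u) = (2 * INR m * b (INR n) + finsum (map (fun j => INR (tauj u j) * ((INR j + 1) / 2)) (seq 1 (m - 1))))
   / (INR m + finsum (map (fun j => INR (tauj u j)) (seq 1 (m - 1)))).
Proof.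
  intros H1 H2. unfold Gm. rewrite stop_len by auto. rewrite tj_sum by auto.
  rewrite Rdiv_plus_distr. f_equal.
  rewrite <- finsum_div. apply finsum_ext. intros j Hj. apply in_seq in Hj.
  rewrite stop_tau by lia. unfold Rdiv. ring.
Qed.


Lemma sum_tau_nonneg u J : 0 <= finsum (map (fun j => INR (tauj u j)) J).
Proof. apply finsum_nonneg. intros; apply pos_INR. Qed.

Lemma Gk_bound (n k m : nat) (bb : R) (Hk : (1 <= k)%nat) (Hkm : (k <= m)%nat) (Hb1 : INR k <= 4 * bb) (Hb2 : 4 * bb <= INR k + 1) (Hbb : b (INR n) = bb) u : (k <= ndist u)%nat -> 0 <= Gm n k (stop k u) <= 2 * bb /\
   ((m <= ndist u)%nat -> Gm n k (stop k u) <= Gm n m (stop m u)).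
Proof.
  intros Hu. rewrite (Gm_stop n k u) by auto.
  rewrite Hbb.
  set (a := finsum (map (fun j => INR (tauj u j)) (seq 1 (k - 1)))).
  set (c := finsum (map (fun j => INR (tauj u j) * ((INR j + 1) / 2)) (seq 1 (k - 1)))).
  assert (Ha : 0 <= a) by apply sum_tau_nonneg.
  assert (Hc0 : 0 <= c).
  { apply finsum_nonneg. intros j _. apply Rmult_le_pos; [apply pos_INR|]. pose proof (pos_INR j); lra. }
  assert (Hc : c <= 2 * bb * a).
  { unfold a, c. rewrite <- finsum_scal. apply finsum_le. intros j Hj. apply in_seq in Hj.
    assert (INR j + 1 <= INR k) by (rewrite <- S_INR; apply le_INR; lia).
    pose proof (pos_INR (tauj u j)). nra. }
  assert (HK : 1 <= INR k) by (apply (le_INR 1); auto).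
  split.
  - split; [apply Rdiv_le_0_compat; [nra|lra]|].
    replace (2 * bb) with ((2 * bb * (INR k + a)) / (INR k + a)) by (field; lra).
    apply frac_le; try lra. apply Rmult_le_compat_r; lra.
  - intros Hm. rewrite (Gm_stop n m u) by lia. rewrite Hbb.
    assert (Hs : seq 1 (m - 1) = seq 1 (k - 1) ++ seq k (m - k)).
    { replace (m - 1)%nat with ((k - 1) + (m - k))%nat by lia. rewrite seq_app. f_equal. f_equal. lia. }
    rewrite Hs, !map_app, !finsum_app. fold a c.
    set (al := finsum (map (fun j => INR (tauj u j)) (seq k (m - k)))).
    set (g := finsum (map (fun j => INR (tauj u j) * ((INR j + 1) / 2)) (seq k (m - k)))).
    replace (2 * INR m * bb + (c + g)) with (2 * INR m * bb + c + g) by ring.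
    replace (2 * INR m * bb + c + g) with (2 * INR m * bb + (c + g)) by ring.
    replace (INR m + (a + al)) with (INR m + a + al) by ring.
    apply key_ineq; try lra.
    + apply le_INR; auto.
    + apply sum_tau_nonneg.
    + unfold al, g. rewrite <- finsum_scal. apply finsum_le. intros j Hj. apply in_seq in Hj.
      assert (INR k <= INR j) by (apply le_INR; lia).
      pose proof (pos_INR (tauj u j)). nra.
Qed.


Lemma missing n u : (forall y, In y u -> (y < n)%nat) -> (ndist u < n)%nat -> exists v, (v < n)%nat /\ ~ In v u.
Proof.
  intros Hu Hd. apply NNPP. intros Hno.
  assert (incl (seq 0 n) (nodup Nat.eq_dec u)).
  { intros v Hv. apply in_seq in Hv. apply nodup_In. apply NNPP. intro Hn. apply Hno. exists v; split; auto; lia. }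
  pose proof (NoDup_incl_length (seq_NoDup n 0) H). rewrite length_seq in H0. unfold ndist in Hd. lia.
Qed.

Lemma term_le_sum {X} (f : X -> R) l v : In v l -> (forall x, In x l -> 0 <= f x) -> f v <= finsum (map f l).
Proof.
  induction l; simpl; intros Hv Hf; [contradiction|]. destruct Hv as [<-|Hv].
  - assert (0 <= finsum (map f l)) by (apply finsum_nonneg; auto). lra.
  - assert (0 <= f a) by auto. assert (f v <= finsum (map f l)) by auto. lra.
Qed.

Lemma count_neq v n : finsum (map (fun x => if Nat.eq_dec x v then 0 else 1) (seq 0 n)) = INR n - (if Nat.ltb v n then 1 else 0).
Proof.
  induction n.
  - simpl. lra.
  - rewrite seq_S, map_app, finsum_app, IHn. simpl finsum. rewrite S_INR.
    destruct (Nat.ltb_spec v n); destruct (Nat.ltb_spec v (S n));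
    destruct (Nat.eq_dec _ _); try lia; lra.
Qed.

Lemma count_avoid n v L : (v < n)%nat ->
  finsum (map (fun u => if in_dec Nat.eq_dec v u then 0 else 1) (all_seqs n L)) = INR (n - 1) ^ L.
Proof.
  intros Hv. induction L.
  - simpl. lra.
  - rewrite sum_all_S. simpl pow. rewrite <- IHL, <- finsum_scal.
    apply finsum_ext. intros u _.
    rewrite (finsum_ext _ (fun x => (if in_dec Nat.eq_dec v u then 0 else 1) * (if Nat.eq_dec x v then 0 else 1))).
    + rewrite finsum_scal, count_neq. assert (Nat.ltb v n = true) as -> by (apply Nat.ltb_lt; auto).
      rewrite minus_INR by lia. simpl INR. lra.
    + intros x _. destruct (in_dec Nat.eq_dec v (u ++ [x])) as [I|I];
      destruct (in_dec Nat.eq_dec v u) as [J|J]; destruct (Nat.eq_dec x v) as [K|K]; try lra;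
      first [ apply in_app_or in I; destruct I as [I|[I|[]]]; [contradiction|congruence]
            | exfalso; apply I; apply in_or_app; first [left; assumption | right; left; congruence] ].
Qed.

Lemma Qsum n L : finsum (map (fun u => if Nat.ltb (ndist u) n then 1 else 0) (all_seqs n L)) <= INR n * INR (n - 1) ^ L.
Proof.
  apply Rle_trans with (finsum (map (fun u => finsum (map (fun v => if in_dec Nat.eq_dec v u then 0 else 1) (seq 0 n))) (all_seqs n L))).
  - apply finsum_le. intros u Hu. destruct (Nat.ltb (ndist u) n) eqn:E.
    + apply Nat.ltb_lt in E. destruct (missing n u (proj1 (all_seqs_bound _ _ _ Hu)) E) as [v [Hv Hn]].
      apply Rle_trans with ((fun v => if in_dec Nat.eq_dec v u then 0 else 1) v).
      * simpl. destruct in_dec; [contradiction|lra].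
      * apply (term_le_sum (fun v => if in_dec Nat.eq_dec v u then 0 else 1)). apply in_seq; lia. intros; destruct in_dec; lra.
    + apply finsum_nonneg. intros; destruct in_dec; lra.
  - rewrite (finsum_swap (fun u v => if in_dec Nat.eq_dec v u then 0 else 1)).
    rewrite (finsum_ext _ (fun _ => INR (n - 1) ^ L)).
    + rewrite finsum_const, length_seq. lra.
    + intros v Hv. apply in_seq in Hv. apply count_avoid. lia.
Qed.

Lemma pow_div_R a c L : c <> 0 -> (a / c) ^ L = a ^ L / c ^ L.
Proof. intros Hc. induction L; simpl; [field|rewrite IHL; field; split; auto; apply pow_nonzero; auto]. Qed.

Lemma geom_cv r : 0 <= r < 1 -> Un_cv (fun L => r ^ L) 0.
Proof.
  intros Hr e He. destruct (pow_lt_1_zero r ltac:(rewrite Rabs_pos_eq; lra) e He) as [N HN].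
  exists N. intros L HL. unfold R_dist. rewrite Rminus_0_r. auto.
Qed.

Lemma F_cmp n k m bb : (1 <= n)%nat -> (1 <= k)%nat -> (k <= m)%nat -> (m <= n)%nat ->
  INR k <= 4 * bb -> 4 * bb <= INR k + 1 -> b (INR n) = bb -> F4 n k <= F4 n m.
Proof.
  intros Hn Hk Hkm Hmn Hb1 Hb2 Hbb.
  assert (HK : 1 <= INR k) by (apply (le_INR 1); auto).
  assert (Hnn : 0 < INR n) by (apply lt_0_INR; lia).
  set (r := INR (n - 1) / INR n).
  assert (Hr : 0 <= r < 1).
  { unfold r. rewrite minus_INR by lia. simpl INR. split.
    - apply Rdiv_le_0_compat; [|lra]. assert (1 <= INR n) by (apply (le_INR 1); auto). lra.
    - apply Rmult_lt_reg_r with (INR n); auto. unfold Rdiv. rewrite Rmult_assoc, Rinv_l by lra. lra. }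
  apply (Rle_cv_lim (Un := U n k (Gm n k)) (Vn := fun L => U n m (Gm n m) L + 2 * bb * INR n * r ^ L)).
  3:{ replace (F4 n m) with (F4 n m + 2 * bb * INR n * 0) by ring. apply CV_plus.
      - apply F4_cv; lia.
      - apply cv_scal. apply geom_cv; auto. }
  2:{ apply F4_cv; lia. }
  intros L. unfold U.
  assert (HN : 0 < INR n ^ L) by (apply pow_lt; auto).
  apply Rle_trans with (finsum (map (fun u => (if Nat.leb m (ndist u) then Gm n m (stop m u) else 0) + 2 * bb * (if Nat.ltb (ndist u) n then 1 else 0)) (all_seqs n L)) / INR n ^ L).
  - unfold Rdiv. apply Rmult_le_compat_r; [left; apply Rinv_0_lt_compat; auto|].
    apply finsum_le. intros u _.
    destruct (Nat.leb k (ndist u)) eqn:E1.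
    + apply Nat.leb_le in E1. destruct (Gk_bound n k m bb Hk Hkm Hb1 Hb2 Hbb u E1) as [[G0 G1] G2].
      destruct (Nat.leb m (ndist u)) eqn:E2.
      * apply Nat.leb_le in E2. specialize (G2 E2). destruct Nat.ltb; lra.
      * apply Nat.leb_gt in E2. assert (Nat.ltb (ndist u) n = true) as -> by (apply Nat.ltb_lt; lia). lra.
    + assert (Nat.leb m (ndist u) = false) as ->.
      { apply Nat.leb_gt. apply Nat.leb_gt in E1. lia. }
      assert (0 <= bb) by lra. destruct Nat.ltb; lra.
  - rewrite finsum_plus, finsum_scal. unfold Rdiv. rewrite Rmult_plus_distr_r.
    apply Rplus_le_compat_l. assert (0 <= bb) by lra.
    set (Cs := finsum _).
    replace (2 * bb * Cs * / INR n ^ L) with ((2*bb) * (Cs * / INR n ^ L)) by ring.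
    replace (2 * bb * INR n * r ^ L) with ((2*bb) * (INR n * r ^ L)) by ring.
    apply Rmult_le_compat_l; [lra|].
    unfold r. rewrite pow_div_R by lra. unfold Rdiv.
    rewrite <- Rmult_assoc. apply Rmult_le_compat_r; [left; apply Rinv_0_lt_compat; auto|].
    apply Qsum.
Qed.


Definition stepf (FF : nat -> R) := fun best k => if Rlt_dec (FF k) (FF best) then k else best.

Lemma fold_gen (FF : nat -> R) c : forall a best,
  (fold_left (stepf FF) (seq a c) best = best \/ (a <= fold_left (stepf FF) (seq a c) best < a + c)%nat) /\
  FF (fold_left (stepf FF) (seq a c) best) <= FF best /\
  forall x, (a <= x < a + c)%nat -> FF (fold_left (stepf FF) (seq a c) best) <= FF x.
Proof.
  induction c; intros a best; simpl.
  - split; [auto|]. split; [lra|]. intros; lia.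
  - destruct (IHc (S a) (stepf FF best a)) as [H1 [H2 H3]].
    assert (Hb0 : (stepf FF best a = a /\ FF a < FF best) \/ (stepf FF best a = best /\ ~ FF a < FF best)).
    { unfold stepf. destruct Rlt_dec; auto. }
    destruct Hb0 as [[E Hl]|[E Hl]]; rewrite E in H1, H2, H3 |- *.
    + split; [destruct H1; [right; lia|right; lia]|]. split; [lra|].
      intros x Hx. destruct (Nat.eq_dec x a); [subst; lra|]. apply H3; lia.
    + split; [destruct H1; [left; auto|right; lia]|]. split; [lra|].
      intros x Hx. destruct (Nat.eq_dec x a); [subst; lra|]. apply H3; lia.
Qed.

Lemma fold_keep (FF : nat -> R) c : forall a best, (forall x, (a <= x < a + c)%nat -> FF best <= FF x) ->
  fold_left (stepf FF) (seq a c) best = best.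
Proof.
  induction c; intros a best H; simpl; auto.
  unfold stepf at 2. destruct (Rlt_dec (FF a) (FF best)).
  - specialize (H a ltac:(lia)). lra.
  - apply IHc. intros; apply H; lia.
Qed.

Lemma mopt_le_n n : (1 <= n)%nat -> (mopt n <= n)%nat.
Proof.
  intros Hn. unfold mopt. destruct (fold_gen (F4 n) (n - 1) 2 1) as [H _].
  unfold stepf in H. destruct H; lia.
Qed.

Lemma mopt_le_k n k : (1 <= k)%nat -> (k < n)%nat ->
  (forall m, (k < m <= n)%nat -> F4 n k <= F4 n m) -> (mopt n <= k)%nat.
Proof.
  intros Hk Hkn H. unfold mopt.
  replace (n - 1)%nat with ((k - 1) + (n - k))%nat by lia. rewrite seq_app, fold_left_app.
  replace (2 + (k - 1))%nat with (S k) by lia.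
  destruct (fold_gen (F4 n) (k - 1) 2 1) as [H1 [H2 H3]]. unfold stepf in H1, H2, H3.
  set (r1 := fold_left _ (seq 2 (k - 1)) 1%nat) in *.
  assert (Hr1 : (r1 <= k)%nat) by (destruct H1; lia).
  assert (HF : F4 n r1 <= F4 n k).
  { destruct (Nat.eq_dec k 1) as [->|]; [|apply H3; lia].
    destruct H1 as [->|]; [lra|lia]. }
  pose proof (fold_keep (F4 n) (n - k) (S k) r1) as K. unfold stepf in K. rewrite K; auto.
  intros x Hx. specialize (H x ltac:(lia)). lra.
Qed.

Lemma ln2_pos : 0 < ln 2.
Proof. rewrite <- ln_1. apply ln_increasing; lra. Qed.

Lemma ln_le' x y : 0 < x -> x <= y -> ln x <= ln y.
Proof. intros Hx [H|H]; [left; apply ln_increasing; auto|subst; lra]. Qed.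

Lemma pow2_ge n : (1 <= n)%nat -> INR n + 1 <= 2 ^ n.
Proof.
  induction n as [|n IHn]; intros H; [lia|]. destruct (Nat.eq_dec n 0) as [->|Hn0]; [simpl; lra|].
  specialize (IHn ltac:(lia)). assert (1 <= INR n) by (apply (le_INR 1); lia). rewrite S_INR. simpl. lra.
Qed.

Lemma b_upper n : (1 <= n)%nat -> b (INR n) <= log2 (INR n + 1).
Proof.
  intros Hn. assert (HN : 1 <= INR n) by (apply (le_INR 1); auto).
  pose proof ln2_pos.
  assert (Hl : ln (INR n + 1) <= INR n * ln 2).
  { rewrite <- ln_pow by lra. apply ln_le'; [lra|]. apply pow2_ge; auto. }
  unfold b, log2.
  assert (ln (INR n + 1) / ln 2 <= INR n) by (apply Rmult_le_reg_r with (ln 2); auto; unfold Rdiv; rewrite Rmult_assoc, Rinv_l; lra).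
  assert (0 <= ln (INR n + 1) / ln 2).
  { apply Rdiv_le_0_compat; auto. rewrite <- ln_1. apply ln_le'; lra. }
  replace ((1 + 1 / INR n) * (ln (INR n + 1) / ln 2) - 1) with
    (ln (INR n + 1) / ln 2 + (ln (INR n + 1) / ln 2) / INR n - 1) by (field; lra).
  assert ((ln (INR n + 1) / ln 2) / INR n <= 1).
  { apply Rmult_le_reg_r with (INR n); [lra|]. unfold Rdiv at 1. rewrite Rmult_assoc, Rinv_l; lra. }
  lra.
Qed.

Lemma b_lower n : (1 <= n)%nat -> 1/2 <= b (INR n).
Proof.
  intros Hn. pose proof ln2_pos. unfold b, log2.
  destruct (Nat.eq_dec n 1) as [->|H1].
  - simpl INR. replace (1 + 1) with 2 by lra. replace ((1 + 1/1) * (ln 2 / ln 2) - 1) with 1 by (field; lra). lra.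
  - assert (HN : 2 <= INR n) by (apply (le_INR 2); lia).
    assert (0 < 1 / INR n) by (apply Rdiv_lt_0_compat; lra).
    destruct (Nat.eq_dec n 2) as [->|H2].
    + assert (ln 2 <= ln (INR 2 + 1)) by (apply ln_le'; simpl; lra).
      assert (1 <= ln (INR 2 + 1) / ln 2).
      { apply Rmult_le_reg_r with (ln 2); auto. unfold Rdiv; rewrite Rmult_assoc, Rinv_l; lra. }
      simpl INR in *. replace (1 / (1 + 1)) with (1/2) by field. nra.
    + assert (HN3 : INR 3 <= INR n) by (apply le_INR; lia). replace (INR 3) with 3 in HN3 by (simpl; lra).
      assert (ln 4 <= ln (INR n + 1)) by (apply ln_le'; lra).
      assert (ln 4 = 2 * ln 2) by (replace 4 with (2 * 2) by lra; rewrite ln_mult; lra).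
      assert (2 <= ln (INR n + 1) / ln 2).
      { apply Rmult_le_reg_r with (ln 2); auto. unfold Rdiv; rewrite Rmult_assoc, Rinv_l; lra. }
      nra.
Qed.

Theorem proposition2 (n : nat) (hn : (1 <= n)%nat) :
  INR (mopt n) < 4 * b (INR n) /\ 4 * b (INR n) <= 4 * log2 (INR n + 1).
Proof.
  split; [|pose proof (b_upper n hn); lra].
  set (bb := b (INR n)). pose proof (b_lower n hn) as Hbl. fold bb in Hbl.
  set (z := (- up (- (4 * bb)))%Z).
  destruct (archimed (- (4 * bb))) as [A1 A2].
  assert (Hz1 : IZR z < 4 * bb) by (unfold z; rewrite opp_IZR; lra).
  assert (Hz2 : 4 * bb <= IZR z + 1) by (unfold z; rewrite opp_IZR; lra).
  assert (Hz0 : (1 <= z)%Z) by (apply le_IZR; lra).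
  set (k := Z.to_nat z).
  assert (Hk : INR k = IZR z) by (unfold k; rewrite INR_IZR_INZ, Z2Nat.id by lia; reflexivity).
  assert (Hk1 : (1 <= k)%nat) by (unfold k; lia).
  destruct (Nat.lt_ge_cases k n) as [Hkn|Hkn].
  - pose proof (mopt_le_k n k Hk1 Hkn) as M.
    assert ((mopt n <= k)%nat).
    { apply M. intros m Hm. apply (F_cmp n k m bb); auto; try lia; lra. }
    apply le_INR in H. lra.
  - pose proof (mopt_le_n n hn). apply le_INR in H, Hkn. lra.
Qed.
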